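(* Let $G$ be a connected graph with $n\ge 12$ vertices and $n+k$ edges, where $1\le k\le 10$. If the minimum degree satisfies $\delta(G)\ge 2$, then $R(G)>\sqrt{n-1}+\frac{2(k+1)}{n\sqrt{n-1}}$.
   Context: All graphs are finite and simple. For a vertex $u$, $d(u)$ is its degree. The Randić index is $R(G)=\sum_{\{u,v\}\in E(G)} \frac{1}{\sqrt{d(u)d(v)}}$. *)

(* Defs.v *)
From HB Require Import structures.
From mathcomp Require Import all_boot all_order all_algebra.
Set Implicit Arguments. Unset Strict Implicit. Unset Printing Implicit Defensive.
Import Order.TTheory GRing.Theory Num.Theory.

Definition simple_graph (T : finType) (e : rel T) : Prop :=
  symmetric e /\ irreflexive e.

Definition deg (T : finType) (e : rel T) (u : T) : nat := #|[set v | e u v]|.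

(* Edge set E(G): each unordered edge {u,v} represented once, as the ordered
   pair (u,v) with enum_rank u < enum_rank v. *)
Definition edges (T : finType) (e : rel T) : {set T * T} :=
  [set p : T * T | e p.1 p.2 && (enum_rank p.1 < enum_rank p.2)%N].

Definition connected (T : finType) (e : rel T) : Prop :=
  forall x y : T, connect e x y.

Definition randic (R : rcfType) (T : finType) (e : rel T) : R :=
  (\sum_(p in edges e) (Num.sqrt ((deg e p.1 * deg e p.2)%:R : R))^-1)%R.

(* Main.v *)
Require Import Defs.
From HB Require Import structures.
From mathcomp Require Import all_boot all_order all_algebra.
From mathcomp Require Import ring lra.
Import Order.TTheory GRing.Theory Num.Theory.

Section Helpers.
Local Open Scope ring_scope.
Lemma handshake (R : comNzRingType) (T : finType) (e : rel T) (G : T -> R) :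
  symmetric e -> irreflexive e ->
  \sum_(p in edges e) (G p.1 + G p.2) = \sum_u (deg e u)%:R * G u.
Proof.
move=> sym irr.
have A : \sum_u (deg e u)%:R * G u = \sum_(p | e p.1 p.2) G p.1.
  rewrite -(pair_big_dep xpredT (fun u v => e u v) (fun u v => G u)) /=.
  apply: eq_bigr => u _.
  rewrite (eq_bigl (fun v => v \in [set v | e u v])); last by move=> v; rewrite inE.
  by rewrite sumr_const /deg mulr_natl.
rewrite A big_split /= [RHS](bigID (fun p : T * T => (enum_rank p.1 < enum_rank p.2)%N)) /=.
congr (_ + _).
  by apply: eq_bigl => p; rewrite /edges inE.
rewrite (reindex_inj (h := fun p : T * T => (p.2, p.1))); last first.
  by move=> [a b] [c d] /= [-> ->].
apply: eq_bigl => [[u v]] /=.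
rewrite /edges inE /= (sym v u).
case euv: (e u v) => //=.
have nuv : u != v by apply: contraTneq euv => ->; rewrite irr.
have : enum_rank u != enum_rank v by apply: contra nuv => /eqP/enum_rank_inj ->.
rewrite neq_ltn; case/orP=> h.
  by move: h; rewrite /= => h; rewrite h /= ltnNge ltnW.
by move: h; rewrite /= => h; rewrite h ltnNge ltnW.

Qed.
Lemma edge_bound (R : rcfType) (a b q : R) : 0 < q -> q*q = 2 -> q <= a -> q <= b ->
  (q*a)^-1 - 1/4 + ((q*b)^-1 - 1/4) <= (a*b)^-1.
Proof.
move=> q0 qq qa qb.
have a0 : 0 < a by apply: lt_le_trans qa.
have b0 : 0 < b by apply: lt_le_trans qb.
rewrite !invfM.
have xz : a^-1 <= q^-1 by rewrite lef_pV2 ?posrE.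
have yz : b^-1 <= q^-1 by rewrite lef_pV2 ?posrE.
have zz : q^-1 * q^-1 = 1/2 by rewrite -invfM qq div1r.
have h : 0 <= (q^-1 - a^-1) * (q^-1 - b^-1) by apply: mulr_ge0; rewrite subr_ge0.
lra.
Qed.

Lemma vertex_bound (R : rcfType) (a q s : R) : 0 < q -> q*q = 2 -> q <= a -> a <= s ->
  1 - 2*(q*s+2)^-1 + a*a*((q*s+2)^-1-1/4) <= a*a*((q*a)^-1 - 1/4).
Proof.
move=> q0 qq qa as_.
have a0 : 0 < a by apply: lt_le_trans qa.
have s0 : 0 < s by apply: lt_le_trans as_.
have d0 : 0 < q*s+2 by rewrite addr_gt0 ?mulr_gt0.
have key : 0 <= (a-q)*(q*s+2) - (a*a-2)*q.
  have : 0 <= (a-q)*q*(s-a) by rewrite !mulr_ge0 // ?subr_ge0 // ltW.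
  by rewrite -qq; move=> h; apply: le_trans h _; rewrite le_eqVlt; apply/orP; left; apply/eqP; ring.
have E : a*a*((q*a)^-1 - 1/4) - (1 - 2*(q*s+2)^-1 + a*a*((q*s+2)^-1-1/4))
   = ((a-q)*(q*s+2) - (a*a-2)*q) / (q*(q*s+2)).
  field; apply/andP; split; rewrite ?gt_eqF //; exact: lt0r_neq0.
rewrite -subr_ge0 E divr_ge0 // ltW // mulr_gt0 //.
Qed.
Lemma final_poly (R : realFieldType) (t k s c n : R) : 0 <= t -> 1 <= k <= 10 ->
  s = 33/10 + t -> c = 17/12 -> n = s*s+1 ->
  0 < (n-k)*n*s*(c*s+2)+4*k*n*s-2*n*s*s*(c*s+2)-4*(k+1)*(c*s+2).
Proof.
move=> t0 /andP[k1 k10] -> -> ->.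
have t2 : 0 <= t^+2 by rewrite exprn_ge0.
have t3 : 0 <= t^+3 by rewrite exprn_ge0.
have t4 : 0 <= t^+4 by rewrite exprn_ge0.
have t5 : 0 <= t^+5 by rewrite exprn_ge0.
have t6 : 0 <= t^+6 by rewrite exprn_ge0.
have u0 : 0 <= 10 - k by lra.
have u1 : 0 <= (10 - k)*t by rewrite mulr_ge0.
have u2 : 0 <= (10 - k)*t^+2 by rewrite mulr_ge0.
have u3 : 0 <= (10 - k)*t^+3 by rewrite mulr_ge0.
have u4 : 0 <= (10 - k)*t^+4 by rewrite mulr_ge0.
rewrite !exprS expr0 !mulr1 in t2 t3 t4 t5 t6 u2 u3 u4.
lra.
Qed.

Lemma final (R : realFieldType) (s q k : R) : 11 <= s*s -> 0 <= s -> 0 < q -> q*q = 2 ->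
  1 <= k <= 10 ->
  s + 2*(k+1)/((s*s+1)*s) < (s*s+1-k)/2 + 2*k/(q*s+2).
Proof.
move=> ss s0 q0 qq /andP[k1 k10].
have s33 : 33/10 <= s.
  rewrite leNgt; apply/negP => h.
  have : s*s < 33/10*(33/10) by apply: ltr_pM.
  lra.
have qc : q <= 17/12.
  rewrite leNgt; apply/negP => h.
  have : 17/12*(17/12) < q*q by apply: ltr_pM => //; lra.
  lra.
have s1 : 0 < s by lra.
have d1 : 0 < q*s+2 by rewrite addr_gt0 ?mulr_gt0.
have d2 : 0 < 17/12*s+2 by lra.
have le1 : 2*k/(17/12*s+2) <= 2*k/(q*s+2).
  rewrite ler_pdivlMr // mulrAC ler_pdivrMr //.
  rewrite ler_pM2l; last lra.
  by rewrite lerD2r ler_wpM2r // ltW.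
apply: lt_le_trans (lerD (lexx _) le1).
have n0 : 0 < (s*s+1)*s by rewrite mulr_gt0 // ltr_wpDl // mulr_ge0.
set P := (s*s+1-k)*(s*s+1)*s*(17/12*s+2)+4*k*(s*s+1)*s-2*(s*s+1)*s*s*(17/12*s+2)-4*(k+1)*(17/12*s+2).
have E : (s*s+1-k)/2 + 2*k/(17/12*s+2) - (s + 2*(k+1)/((s*s+1)*s))
   = P / (2*((s*s+1)*s)*(17/12*s+2)).
  rewrite /P; field; apply/and3P; split; apply/negP => /eqP h; lra.
rewrite -subr_gt0 E; apply: divr_gt0; last by apply: mulr_gt0 => //; apply: mulr_gt0.
apply: (@final_poly R (s - 33/10) k s (17/12) (s*s+1)); rewrite ?k1 ?k10 //; lra.
Qed.
End Helpers.

Theorem lemma2p7 (R : rcfType) (T : finType) (e : rel T) (n k : nat) :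
  simple_graph e -> connected e ->
  #|T| = n -> (12 <= n)%N ->
  #|edges e| = (n + k)%N -> (1 <= k <= 10)%N ->
  (forall u : T, (2 <= deg e u)%N) ->
  (Num.sqrt ((n - 1)%:R : R) + 2%:R * (k + 1)%:R / (n%:R * Num.sqrt ((n - 1)%:R : R))
     < randic R e)%R.
Proof.
Local Open Scope ring_scope.
move=> [sym irr] _ cardT n12 cardE /andP[k1 k10] dge2.
set q : R := Num.sqrt 2.
set s : R := Num.sqrt (n - 1)%:R.
pose a (u : T) : R := Num.sqrt (deg e u)%:R.
have q0 : 0 < q by rewrite sqrtr_gt0.
have qq : q * q = 2 by rewrite -expr2 sqr_sqrtr.
have ss : s * s = (n - 1)%:R by rewrite -expr2 sqr_sqrtr ?ler0n.
have aa u : a u * a u = (deg e u)%:R by rewrite -expr2 sqr_sqrtr ?ler0n.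
have qa u : q <= a u by rewrite ler_sqrt ?ler0n // (ler_nat R 2).
have degle u : (deg e u <= n - 1)%N.
  rewrite /deg subn1 -cardT -(cardsC1 u); apply: subset_leq_card.
  by apply/subsetP => v; rewrite !inE => h; apply: contraTneq h => ->; rewrite irr.
have as_ u : a u <= s by rewrite ler_sqrt ?ler0n // ler_nat.
set c : R := (q * s + 2)^-1.
have step1 : \sum_(p in edges e) (((q * a p.1)^-1 - 1/4) + ((q * a p.2)^-1 - 1/4)) <= randic R e.
  rewrite /randic; apply: ler_sum => p _.
  by rewrite natrM sqrtrM ?ler0n //; apply: edge_bound.
rewrite (@handshake R T e (fun u => (q * a u)^-1 - 1/4) sym irr) in step1.
have step2 : \sum_u (1 - 2 * c + (deg e u)%:R * (c - 1/4)) <= \sum_u (deg e u)%:R * ((q * a u)^-1 - 1/4).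
  apply: ler_sum => u _; rewrite -aa; exact: vertex_bound.
have sumdeg : \sum_u (deg e u)%:R = 2 * (n + k)%:R :> R.
  have := @handshake R T e (fun _ : T => 1 : R) sym irr.
  rewrite sumr_const cardE => h.
  rewrite (eq_bigr (fun u => (deg e u)%:R * 1)); last by move=> u _; rewrite mulr1.
  by rewrite -h -[X in X = _]mulr_natr.
have step3 : \sum_u (1 - 2 * c + (deg e u)%:R * (c - 1/4)) = (s*s+1-k%:R)/2 + 2*k%:R/(q*s+2).
  rewrite big_split /= sumr_const -mulr_suml sumdeg cardT -[(1 - 2 * c) *+ n]mulr_natr natrD ss natrB ?(leq_trans _ n12) // -/c.
  lra.

have n1 : (1 <= n)%N by apply: leq_trans n12.
have nE : n%:R = s*s+1 :> R by rewrite ss natrB // subrK.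
have s11 : 11 <= s * s by rewrite ss ler_nat leq_subRL.
have kb : (1 : R) <= (k%:R : R) <= 10 by rewrite ler1n k1 /= ler_nat.
have fin := @final R s q k%:R s11 (sqrtr_ge0 _) q0 qq kb.
rewrite natrD mulr1n nE.
apply: lt_le_trans fin _.
rewrite -step3; exact: le_trans step2 step1.
Qed.
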